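(* Let $G=(V,E)$ be a connected almost bipartite permutation graph that contains a hole, let $C$ be a shortest hole, $m=|C|$, $c_0,\dots,c_{m-1}$ its vertices in cyclic order (indices modulo $m$), and for each $i$ let $A_i=\{v\in V: N(v)\cap C=\{c_{i-1},c_{i+1}\}\}$ and $B_i=\{v\in V: N(v)\cap C=\{c_i\}\}$ (indices modulo $m$). For $i\in\{0,\dots,m-1\}$ define the relation $<_{A_i}$ on $A_i$ by: $u<_{A_i}u'$ iff there is $w\in B_{i-2}\cup A_{i-1}$ with $u\in N(w)$ and $u'\notin N(w)$, or there is $w\in A_{i+1}\cup B_{i+2}$ with $u'\in N(w)$ and $u\notin N(w)$. Define $<_{B_i}$ on $B_i$ by: $w<_{B_i}w'$ iff there is $u\in A_{i-2}\cup B_{i-1}$ with $w\in N(u)$ and $w'\notin N(u)$, or there is $u\in B_{i+1}\cup A_{i+2}$ with $w'\in N(u)$ and $w\notin N(u)$. Then for every $i\in\{0,\dots,m-1\}$: (1) $(A_i,<_{A_i})$ is a strict partial order, and $u,u'\in A_i$ are incomparable in it if and only if $N(u)=N(u')$; (2) $(B_i,<_{B_i})$ is a strict partial order, and $w,w'\in B_i$ are incomparable in it if and only if $N(w)=N(w')$.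
   Context: All graphs are finite, simple, undirected; $N(v)$ is the open neighborhood of $v$. A hole is an induced cycle on at least five vertices. $K_3$ is the triangle, $C_k$ the cycle on $k$ vertices. $T_2$ is the tree on 7 vertices obtained from the claw $K_{1,3}$ by subdividing each edge once. $X_2$ is the 7-vertex graph obtained from a 4-cycle by attaching one new pendant vertex to each of three of its four vertices. $X_3$ is the 7-vertex graph obtained from the domino (two 4-cycles sharing exactly one edge) by attaching one new pendant vertex to one endpoint of the shared edge. A graph is an almost bipartite permutation graph if it contains none of $T_2, X_2, X_3, K_3, C_5,\dots,C_9$ as an induced subgraph. A strict partial order is an irreflexive transitive relation. *)

(* Defs.v *)
(* Simple graphs: symmetric irreflexive relation e on a finType T. *)
From mathcomp Require Import all_boot.
Set Implicit Arguments. Unset Strict Implicit. Unset Printing Implicit Defensive.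

Section Defs.
Variable T : finType.
Variable e : rel T.

Definition Nbh (v : T) : {set T} := [set u | e v u].

Definition connected_graph : Prop := forall x y : T, connect e x y.

Definition induced_sub (F : finType) (eF : rel F) : Prop :=
  exists f : F -> T, injective f /\ forall x y, e (f x) (f y) = eF x y.
End Defs.

Definition mkrel (n : nat) (s : seq (nat * nat)) : rel 'I_n :=
  fun x y => (((x : nat), (y : nat)) \in s) || (((y : nat), (x : nat)) \in s).

Definition K3rel : rel 'I_3 := fun x y => x != y.
Definition Cyclerel (k : nat) : rel 'I_k :=
  fun x y => (y == (x.+1 %% k) :> nat) || (x == (y.+1 %% k) :> nat).
(* T2: claw with center 0, each edge subdivided *)
Definition T2rel : rel 'I_7 := @mkrel 7 [:: (0,1); (1,2); (0,3); (3,4); (0,5); (5,6)].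
(* X2: 4-cycle 0-1-2-3-0 with pendants 4,5,6 at 0,1,2 *)
Definition X2rel : rel 'I_7 :=
  @mkrel 7 [:: (0,1); (1,2); (2,3); (3,0); (4,0); (5,1); (6,2)].
(* X3: domino (2x3 grid 0-1-2 / 3-4-5, shared edge 1-4) plus pendant 6 at 1 *)
Definition X3rel : rel 'I_7 :=
  @mkrel 7 [:: (0,1); (1,2); (3,4); (4,5); (0,3); (1,4); (2,5); (6,1)].

Definition almost_bip_perm (T : finType) (e : rel T) : Prop :=
  ~ induced_sub e T2rel /\ ~ induced_sub e X2rel /\ ~ induced_sub e X3rel /\
  ~ induced_sub e K3rel /\
  (forall k, 5 <= k <= 9 -> ~ induced_sub e (@Cyclerel k)).

Section Hole.
Variable T : finType.
Variable e : rel T.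

Definition is_hole (m : nat) (c : nat -> T) : Prop :=
  5 <= m /\
  (forall i j, i < m -> j < m -> c i = c j -> i = j) /\
  (forall i j, i < m -> j < m ->
     e (c i) (c j) = (j == i.+1 %% m) || (i == j.+1 %% m)).

Variable m : nat.
Variable c : nat -> T.

Definition cm (i : nat) : T := c (i %% m).
Definition im (i d : nat) : nat := (i + m - d) %% m.
Definition ip (i d : nat) : nat := (i + d) %% m.

Definition Cset : {set T} := [set x | [exists k : 'I_m, x == c k]].

Definition Aset (i : nat) : {set T} :=
  [set v | Nbh e v :&: Cset == [set cm (im i 1); cm (ip i 1)]].
Definition Bset (i : nat) : {set T} :=
  [set v | Nbh e v :&: Cset == [set cm i]].

Definition ltA (i : nat) (u u' : T) : bool :=
  [exists w, (w \in Bset (im i 2) :|: Aset (im i 1)) && e w u && ~~ e w u'] ||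
  [exists w, (w \in Aset (ip i 1) :|: Bset (ip i 2)) && e w u' && ~~ e w u].
Definition ltB (i : nat) (w w' : T) : bool :=
  [exists u, (u \in Aset (im i 2) :|: Bset (im i 1)) && e u w && ~~ e u w'] ||
  [exists u, (u \in Bset (ip i 1) :|: Aset (ip i 2)) && e u w' && ~~ e u w].
End Hole.

Definition strict_po_on (T : finType) (S : {set T}) (r : rel T) : Prop :=
  (forall x, x \in S -> ~~ r x x) /\
  (forall x y z, x \in S -> y \in S -> z \in S -> r x y -> r y z -> r x z).

(* Main.v *)
Require Import Defs.
From mathcomp Require Import all_boot zify.
Set Implicit Arguments. Unset Strict Implicit. Unset Printing Implicit Defensive.

Module S2.

Section Forb.
Variables (T : finType) (e : rel T).
Hypothesis esym : symmetric e.
Hypothesis eirr : irreflexive e.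
Hypothesis abp : almost_bip_perm e.

Lemma induced_chk (n : nat) (eF : rel 'I_n) (g : nat -> nat -> bool)
  (Hg : forall x y : 'I_n, eF x y = g x y)
  (chk : all (fun x => all (fun y => (x == y) || g x y ||
          has (fun z => g x z != g y z) (iota 0 n)) (iota 0 n)) (iota 0 n))
  (l : seq T) (t0 : T)
  (Hf : forall a b, a < n -> b < n -> e (nth t0 l a) (nth t0 l b) = g a b) :
  induced_sub e eF.
Proof.
exists (fun x : 'I_n => nth t0 l x); split; last first.
  by move=> x y; rewrite Hf // Hg.
move=> x y Exy; apply/val_inj/eqP => /=.
have /allP /(_ (nat_of_ord x)) := chk.
rewrite mem_iota /= add0n ltn_ord => /(_ isT) /allP /(_ (nat_of_ord y)).
rewrite mem_iota /= add0n ltn_ord => /(_ isT) /orP [/orP [//|]|].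
  by rewrite -Hf // Exy eirr.
case/hasP => z; rewrite mem_iota add0n /= => zn.
by rewrite -!Hf // Exy eqxx.
Qed.

Ltac edone := first [ done | by rewrite esym | by apply/negbTE
  | by rewrite esym; apply/negbTE | by rewrite eirr ].

Ltac split7 a ha := case: a ha => [|[|[|[|[|[|[|a]]]]]]] ha //.

Lemma noX2 v0 v1 v2 v3 v4 v5 v6 :
  e v0 v1 ->
  ~~ e v0 v2 ->
  e v0 v3 ->
  e v0 v4 ->
  ~~ e v0 v5 ->
  ~~ e v0 v6 ->
  e v1 v2 ->
  ~~ e v1 v3 ->
  ~~ e v1 v4 ->
  e v1 v5 ->
  ~~ e v1 v6 ->
  e v2 v3 ->
  ~~ e v2 v4 ->
  ~~ e v2 v5 ->
  e v2 v6 ->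
  ~~ e v3 v4 ->
  ~~ e v3 v5 ->
  ~~ e v3 v6 ->
  ~~ e v4 v5 ->
  ~~ e v4 v6 ->
  ~~ e v5 v6 -> False.
Proof.
move=> *; case: abp => _ [H _]; apply: H.
apply: (@induced_chk 7 _ (fun a b => ((a, b) \in [:: (0,1); (1,2); (2,3); (3,0); (4,0); (5,1); (6,2)]) || ((b, a) \in [:: (0,1); (1,2); (2,3); (3,0); (4,0); (5,1); (6,2)])) _ _ [:: v0; v1; v2; v3; v4; v5; v6] v0).
- by [].
- by [].
move=> a b ha hb; case: a ha => [|[|[|[|[|[|[|a]]]]]]] ha //; case: b hb => [|[|[|[|[|[|[|b]]]]]]] hb //; edone.
Qed.

Lemma noX3 v0 v1 v2 v3 v4 v5 v6 :
  e v0 v1 ->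
  ~~ e v0 v2 ->
  e v0 v3 ->
  ~~ e v0 v4 ->
  ~~ e v0 v5 ->
  ~~ e v0 v6 ->
  e v1 v2 ->
  ~~ e v1 v3 ->
  e v1 v4 ->
  ~~ e v1 v5 ->
  e v1 v6 ->
  ~~ e v2 v3 ->
  ~~ e v2 v4 ->
  e v2 v5 ->
  ~~ e v2 v6 ->
  e v3 v4 ->
  ~~ e v3 v5 ->
  ~~ e v3 v6 ->
  e v4 v5 ->
  ~~ e v4 v6 ->
  ~~ e v5 v6 -> False.
Proof.
move=> *; case: abp => _ [_ [H _]]; apply: H.
apply: (@induced_chk 7 _ (fun a b => ((a, b) \in [:: (0,1); (1,2); (3,4); (4,5); (0,3); (1,4); (2,5); (6,1)]) || ((b, a) \in [:: (0,1); (1,2); (3,4); (4,5); (0,3); (1,4); (2,5); (6,1)])) _ _ [:: v0; v1; v2; v3; v4; v5; v6] v0).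
- by [].
- by [].
move=> a b ha hb; case: a ha => [|[|[|[|[|[|[|a]]]]]]] ha //; case: b hb => [|[|[|[|[|[|[|b]]]]]]] hb //; edone.
Qed.

Lemma noT2 v0 v1 v2 v3 v4 v5 v6 :
  e v0 v1 ->
  ~~ e v0 v2 ->
  e v0 v3 ->
  ~~ e v0 v4 ->
  e v0 v5 ->
  ~~ e v0 v6 ->
  e v1 v2 ->
  ~~ e v1 v3 ->
  ~~ e v1 v4 ->
  ~~ e v1 v5 ->
  ~~ e v1 v6 ->
  ~~ e v2 v3 ->
  ~~ e v2 v4 ->
  ~~ e v2 v5 ->
  ~~ e v2 v6 ->
  e v3 v4 ->
  ~~ e v3 v5 ->
  ~~ e v3 v6 ->
  ~~ e v4 v5 ->
  ~~ e v4 v6 ->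
  e v5 v6 -> False.
Proof.
move=> *; case: abp => [H _]; apply: H.
apply: (@induced_chk 7 _ (fun a b => ((a, b) \in [:: (0,1); (1,2); (0,3); (3,4); (0,5); (5,6)]) || ((b, a) \in [:: (0,1); (1,2); (0,3); (3,4); (0,5); (5,6)])) _ _ [:: v0; v1; v2; v3; v4; v5; v6] v0).
- by [].
- by [].
move=> a b ha hb; case: a ha => [|[|[|[|[|[|[|a]]]]]]] ha //; case: b hb => [|[|[|[|[|[|[|b]]]]]]] hb //; edone.
Qed.

Lemma noK3 v0 v1 v2 :
  e v0 v1 ->
  e v0 v2 ->
  e v1 v2 -> False.
Proof.
move=> *; case: abp => _ [_ [_ [H _]]]; apply: H.
apply: (@induced_chk 3 _ (fun a b => a != b) _ _ [:: v0; v1; v2] v0).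
- by [].
- by [].
move=> a b ha hb; case: a ha => [|[|[|a]]] ha //; case: b hb => [|[|[|b]]] hb //; edone.
Qed.

Lemma noC5 v0 v1 v2 v3 v4 :
  e v0 v1 ->
  ~~ e v0 v2 ->
  ~~ e v0 v3 ->
  e v0 v4 ->
  e v1 v2 ->
  ~~ e v1 v3 ->
  ~~ e v1 v4 ->
  e v2 v3 ->
  ~~ e v2 v4 ->
  e v3 v4 -> False.
Proof.
move=> *; case: abp => _ [_ [_ [_ H]]]; apply: (H 5 isT).
apply: (@induced_chk 5 _ (fun a b => (b == a.+1 %% 5) || (a == b.+1 %% 5)) _ _ [:: v0; v1; v2; v3; v4] v0).
- by [].
- by [].
move=> a b ha hb; case: a ha => [|[|[|[|[|a]]]]] ha //; case: b hb => [|[|[|[|[|b]]]]] hb //; edone.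
Qed.

Lemma noC6 v0 v1 v2 v3 v4 v5 :
  e v0 v1 ->
  ~~ e v0 v2 ->
  ~~ e v0 v3 ->
  ~~ e v0 v4 ->
  e v0 v5 ->
  e v1 v2 ->
  ~~ e v1 v3 ->
  ~~ e v1 v4 ->
  ~~ e v1 v5 ->
  e v2 v3 ->
  ~~ e v2 v4 ->
  ~~ e v2 v5 ->
  e v3 v4 ->
  ~~ e v3 v5 ->
  e v4 v5 -> False.
Proof.
move=> *; case: abp => _ [_ [_ [_ H]]]; apply: (H 6 isT).
apply: (@induced_chk 6 _ (fun a b => (b == a.+1 %% 6) || (a == b.+1 %% 6)) _ _ [:: v0; v1; v2; v3; v4; v5] v0).
- by [].
- by [].
move=> a b ha hb; case: a ha => [|[|[|[|[|[|a]]]]]] ha //; case: b hb => [|[|[|[|[|[|b]]]]]] hb //; edone.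
Qed.

End Forb.

End S2.
Import S2.

Module H.

Ltac blia := repeat (case: eqP => ? /=); try done; lia.

Section H.
Variables (T : finType) (e : rel T).
Hypothesis esym : symmetric e.
Hypothesis eirr : irreflexive e.
Variables (m : nat) (c : nat -> T).
Hypothesis hole : is_hole e m c.
Hypothesis shortest : forall (m' : nat) (c' : nat -> T), is_hole e m' c' -> m <= m'.

Lemma m_gt0 : 0 < m. Proof. case: hole => h _; lia. Qed.

Lemma cinj a b : a < m -> b < m -> c a = c b -> a = b.
Proof. by case: hole => _ [h _]; apply: h. Qed.

Lemma cadj a b : a < m -> b < m -> e (c a) (c b) = (b == a.+1 %% m) || (a == b.+1 %% m).
Proof. by case: hole => _ [_ h]; apply: h. Qed.

Lemma cc a b : a.+1 < m -> b.+1 < m -> e (c a) (c b) = (b == a.+1) || (a == b.+1).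
Proof. move=> ha hb; rewrite cadj ?modn_small //; lia. Qed.

Lemma modS' p : (p %% m).+1 = p.+1 %[mod m].
Proof. by rewrite -addn1 modnDml addn1. Qed.
Lemma cm_adj p q : e (cm m c p) (cm m c q) = (q == p.+1 %[mod m]) || (p == q.+1 %[mod m]).
Proof.
have mp := m_gt0.
rewrite /cm cadj ?(ltn_pmod _ mp) //.
by rewrite !modS'.
Qed.
Lemma cm_inj p q : cm m c p = cm m c q -> p = q %[mod m].
Proof. have mp := m_gt0. by move/cinj; apply; rewrite ltn_pmod. Qed.

Lemma hole_path n (p : nat -> T) : 5 <= n ->
  (forall s t, s < t -> t < n -> p s = p t -> False) ->
  (forall s t, s < t -> t < n -> e (p s) (p t) = (t == s.+1) || ((s == 0) && (t == n.-1))) ->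
  m <= n.
Proof.
move=> n5 pinj padj; apply: (shortest (c' := p)); split => //; split.
  move=> s t sn tn pst; case: (ltngtP s t) => // h.
  - by case: (pinj _ _ h tn pst).
  - by case: (pinj _ _ h sn (Logic.eq_sym pst)).
move=> s t sn tn; case: (ltngtP s t) => h.
- rewrite padj // (modn_small (_ : s.+1 < n)); last lia.
  case: (ltnP t.+1 n) => h2; first by rewrite modn_small //; blia.
  have -> : t.+1 = n by lia.
  rewrite modnn; blia.
- rewrite esym padj // (modn_small (_ : t.+1 < n)); last lia.
  case: (ltnP s.+1 n) => h2; first by rewrite modn_small //; blia.
  have -> : s.+1 = n by lia.
  rewrite modnn; blia.
- subst t; rewrite eirr.
  case: (ltnP s.+1 n) => h2; first by rewrite modn_small //; blia.
  have -> : s.+1 = n by lia.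
  rewrite modnn; blia.
Qed.

Lemma cm_arc a s t : s < t -> t < m ->
  e (cm m c (a + s)) (cm m c (a + t)) = (t == s.+1) || ((s == 0) && (t == m.-1)).
Proof.
move=> st tm; rewrite cm_adj -!addnS !eqn_modDl.
have mp := m_gt0.
rewrite [t %% m]modn_small // [s %% m]modn_small; last lia.
rewrite [s.+1 %% m]modn_small; last lia.
case: (ltnP t.+1 m) => h2; first by rewrite modn_small //; blia.
have -> : t.+1 = m by lia.
rewrite modnn; blia.
Qed.

Lemma cm_arc_inj a s t : s < t -> t < m -> cm m c (a + s) = cm m c (a + t) -> False.
Proof.
move=> st tm /cm_inj/eqP; rewrite eqn_modDl [t %% m]modn_small // modn_small; lia.
Qed.

Lemma arc1 x a g : 3 <= g -> g <= m - 2 -> e x (cm m c a) -> e x (cm m c (a + g)) ->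
  (forall t, 0 < t -> t < g -> ~~ e x (cm m c (a + t))) -> m <= g + 2.
Proof.
move=> g3 gm xa xg xt.
have Hg : forall s, s <= g -> e x (cm m c (a + s)) = (s == 0) || (s == g).
  move=> s sg; case: (posnP s) => [->|s0]; first by rewrite addn0 xa.
  case: (ltngtP s g) => h; last by subst s; rewrite xg orbT.
    by rewrite (negbTE (xt _ s0 h)); blia.
  lia.
apply: (@hole_path (g + 2) (fun t => if t <= g then cm m c (a + t) else x)); first lia.
- move=> s t st tn; case: ifP => sg; case: ifP => tg.
  + by apply: cm_arc_inj; lia.
  + move=> E.
    have h0 := Hg 0 (leq0n _); have hg := Hg g (leqnn _).
    rewrite eqxx /= in h0; rewrite eqxx orbT in hg.
    rewrite -E in h0 hg.
    case: (posnP s) => [s0|s0]; first by subst s; rewrite eirr in h0.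
    case: (ltngtP s g) => sg'; last by subst s; rewrite eirr in hg.
    * rewrite esym in h0.
      have h0' : s < m by lia.
      have := cm_arc a s0 h0'; rewrite h0 /= => h00.
      rewrite cm_arc in hg; [|lia|lia].
      move: h00 hg; blia.
    * lia.
  + lia.
  + lia.
- move=> s t st tn; case: ifP => sg; case: ifP => tg.
  + rewrite cm_arc; [| lia | lia]. blia.
  + rewrite esym Hg //; blia.
  + lia.
  + lia.
Qed.

Lemma arc2 x y a g : 2 <= g -> g <= m - 2 -> e y (cm m c a) -> e x (cm m c (a + g)) ->
  e x y ->
  (forall t, 0 < t -> t <= g -> ~~ e y (cm m c (a + t))) ->
  (forall t, t < g -> ~~ e x (cm m c (a + t))) -> m <= g + 3.
Proof.
move=> g2 gm ya xg xy yt xt.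
have Hx : forall s, s <= g -> e x (cm m c (a + s)) = (s == g).
  move=> s sg; case: (ltngtP s g) => h; last by subst s; rewrite xg.
    by rewrite (negbTE (xt _ h)); blia.
  lia.
have Hy : forall s, s <= g -> e y (cm m c (a + s)) = (s == 0).
  move=> s sg; case: (posnP s) => [->|s0]; first by rewrite addn0 ya.
  rewrite (negbTE (yt _ s0 sg)); blia.
apply: (@hole_path (g + 3) (fun t => if t <= g then cm m c (a + t)
   else if t == g.+1 then x else y)); first lia.
- move=> s t st tn /=.
  have [tg|tg] := leqP t g.
    rewrite (_ : s <= g = true); last by apply/idP; lia.
    by apply: cm_arc_inj; lia.
  have [sg|sg] := leqP s g.
  + case: ifP => tg1 E.
    * have hg := Hx g (leqnn _); rewrite eqxx -E in hg.
      case: (ltngtP s g) => sg'; last by subst s; rewrite eirr in hg.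
      -- rewrite cm_arc in hg; [|lia|lia].
         have s1 : s = g.-1 by move: hg; blia.
         have := Hx s.-1 (ltac:(lia)).
         have := cm_arc a (s:=s.-1) (t:=s) (ltac:(lia)) (ltac:(lia)).
         rewrite esym E; move=> ->; blia.
      -- lia.
    * have h0 := Hy 0 (leq0n _); rewrite eqxx -E in h0.
      case: (posnP s) => [s0|s0]; first by subst s; rewrite eirr in h0.
      rewrite esym in h0.
      have := cm_arc a (s:=0) (t:=s) s0 (ltac:(lia)); rewrite h0 => h00.
      have s1 : s = 1 by move: h00; blia.
      subst s.
      have := Hy 2 g2; have := cm_arc a (s:=1) (t:=2) (ltac:(lia)) (ltac:(lia)).
      rewrite E => ->; blia.
  + rewrite (_ : s == g.+1 = true); last by apply/eqP; lia.
    rewrite (_ : t == g.+1 = false); last by apply/eqP; lia.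
    move=> E; subst x; by rewrite eirr in xy.
- move=> s t st tn /=.
  have [tg|tg] := leqP t g.
    rewrite (_ : s <= g = true); last by apply/idP; lia.
    rewrite cm_arc; [| lia | lia]. blia.
  have [sg|sg] := leqP s g.
  + case: ifP => tg1.
    * rewrite esym Hx //; blia.
    * rewrite esym Hy //; blia.
  + rewrite (_ : s == g.+1 = true); last by apply/eqP; lia.
    rewrite (_ : t == g.+1 = false); last by apply/eqP; lia.
    rewrite xy; blia.
Qed.

Lemma imE j d : d <= j -> j < m -> im m j d = j - d.
Proof.
move=> dj jm; rewrite /im (_ : j + m - d = j - d + m); last lia.
by rewrite modnDr modn_small //; lia.
Qed.

Lemma ipE j d : j + d < m -> ip m j d = j + d.
Proof. by move=> h; rewrite /ip modn_small. Qed.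

Lemma cmE k : k < m -> cm m c k = c k.
Proof. by move=> h; rewrite /cm modn_small. Qed.

Lemma ceq a b : a < m -> b < m -> (c a == c b) = (a == b).
Proof. move=> am bm; apply/eqP/eqP => [|->] //; exact: cinj. Qed.

Lemma setchar v (P : nat -> bool) (S : {set T}) :
  (forall x, x \in S -> exists2 k, k < m & x = c k) ->
  (forall k, k < m -> (c k \in S) = P k) ->
  (v \in [set v | Nbh e v :&: Cset m c == S]) <->
  (forall k, k < m -> e v (c k) = P k).
Proof.
move=> HS HP; rewrite inE; split.
  move/eqP => E k km; rewrite -HP // -E !inE.
  have -> : [exists k0 : 'I_m, c k == c k0] by apply/existsP; exists (Ordinal km).
  by rewrite andbT.
move=> H; apply/eqP/setP => x; rewrite !inE.
case: (boolP [exists k : 'I_m, x == c k]) => [/existsP [k /eqP ->]|nx].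
  by rewrite andbT H // HP.
rewrite andbF; apply/Logic.eq_sym/negbTE/negP => /HS [k km xk]; case/negP: nx.
by apply/existsP; exists (Ordinal km); rewrite xk.
Qed.

Lemma inA j v : 0 < j -> j.+1 < m ->
  (v \in Aset e m c j) <-> (forall k, k < m -> e v (c k) = (k == j.-1) || (k == j.+1)).
Proof.
move=> j0 jm; rewrite /Aset (imE (d:=1)) ?ipE ?cmE; try lia.
apply: setchar.
  by move=> x; rewrite !inE => /orP [] /eqP ->; [exists (j - 1)|exists (j + 1)]; try lia.
move=> k km; rewrite !inE !ceq; try lia.
Qed.

Lemma inB j v : j < m ->
  (v \in Bset e m c j) <-> (forall k, k < m -> e v (c k) = (k == j)).
Proof.
move=> jm; rewrite /Bset cmE //.
apply: setchar.
  by move=> x; rewrite !inE => /eqP ->; exists j.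
by move=> k km; rewrite !inE !ceq.
Qed.
End H.

End H.
Import H.

Module P.

Section P.
Variables (T : finType) (e : rel T).
Hypothesis esym : symmetric e.

Lemma po_abs (S L R : {set T}) (lt : rel T)
 (ltE : forall a b, lt a b = [exists w, (w \in L) && e w a && ~~ e w b] ||
                             [exists w, (w \in R) && e w b && ~~ e w a])
 (chL : forall a b w1 w2, a \in S -> b \in S -> w1 \in L -> w2 \in L ->
     e w1 a -> ~~ e w1 b -> e w2 b -> ~~ e w2 a -> False)
 (chR : forall a b w1 w2, a \in S -> b \in S -> w1 \in R -> w2 \in R ->
     e w1 a -> ~~ e w1 b -> e w2 b -> ~~ e w2 a -> False)
 (cp : forall a b w1 w2, a \in S -> b \in S -> w1 \in L -> w2 \in R ->
     e w1 a -> e w2 a -> ~~ e w1 b -> ~~ e w2 b -> False) :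
 strict_po_on S lt.
Proof.
split.
  move=> x _; rewrite ltE negb_or; apply/andP; split; apply/existsPn => w;
  by case: (e w x); rewrite ?andbF.
move=> u u' u'' uS u'S u''S; rewrite !ltE.
case/orP => [/existsP [w1 /andP [/andP [w1L w1u] w1u']]|/existsP [w1 /andP [/andP [w1R w1u'] w1u]]];
case/orP => [/existsP [w2 /andP [/andP [w2L w2u'] w2u'']]|/existsP [w2 /andP [/andP [w2R w2u''] w2u']]].
- case: (boolP (e w1 u'')) => h.
    by case: (chL u' u'' w2 w1).
  by apply/orP; left; apply/existsP; exists w1; rewrite w1L w1u h.
- case: (boolP (e w1 u'')) => h.
    by case: (cp u'' u' w1 w2).
  by apply/orP; left; apply/existsP; exists w1; rewrite w1L w1u h.
- case: (boolP (e w2 u)) => h.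
    by apply/orP; left; apply/existsP; exists w2; rewrite w2L h w2u''.
  by case: (cp u' u w2 w1).
- case: (boolP (e w2 u)) => h.
    by case: (chR u u' w2 w1).
  by apply/orP; right; apply/existsP; exists w2; rewrite w2R h w2u''.
Qed.

Lemma inc_abs (S L R : {set T}) (lt : rel T)
 (ltE : forall a b, lt a b = [exists w, (w \in L) && e w a && ~~ e w b] ||
                             [exists w, (w \in R) && e w b && ~~ e w a])
 (cov : forall a b x, a \in S -> b \in S -> e a x -> ~~ e b x -> (x \in L) || (x \in R)) :
 forall a b, a \in S -> b \in S -> (~~ lt a b /\ ~~ lt b a) <-> Nbh e a = Nbh e b.
Proof.
move=> a b aS bS; split.
  case=> nab nba; apply/setP => x; rewrite !inE.
  apply/idP/idP => h; apply: contraT => h'.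
  - have := cov a b x aS bS h h' => /orP [xL|xR].
      case/negP: nab; rewrite ltE; apply/orP; left; apply/existsP; exists x.
      by rewrite xL esym h esym (negbTE h').
    case/negP: nba; rewrite ltE; apply/orP; right; apply/existsP; exists x.
    by rewrite xR esym h esym (negbTE h').
  - have := cov b a x bS aS h h' => /orP [xL|xR].
      case/negP: nba; rewrite ltE; apply/orP; left; apply/existsP; exists x.
      by rewrite xL esym h esym (negbTE h').
    case/negP: nab; rewrite ltE; apply/orP; right; apply/existsP; exists x.
    by rewrite xR esym h esym (negbTE h').
move=> E.
have Ew : forall w, e w a = e w b.
  move=> w; rewrite esym [e w b]esym.
  have : (w \in Nbh e a) = (w \in Nbh e b) by rewrite E.
  by rewrite !inE.
by rewrite !ltE; split; apply/negP => /orP [] /existsP [w]; rewrite Ew; case: (e w b); rewrite ?andbF.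
Qed.
End P.

End P.
Import P.

Module M.

Section M.
Variables (T : finType) (e : rel T).
Hypothesis esym : symmetric e.
Hypothesis eirr : irreflexive e.
Hypothesis abp : almost_bip_perm e.
Variables (m : nat) (c : nat -> T).
Hypothesis hole : is_hole e m c.
Hypothesis shortest : forall (m' : nat) (c' : nat -> T), is_hole e m' c' -> m <= m'.

Lemma hm : 10 <= m.
Proof.
case: hole => h5 [hinj hadj]; case: (leqP 10 m) => // h.
case: abp => _ [_ [_ [_ H]]]; case: (H m); first lia.
exists (fun x : 'I_m => c x); split.
  by move=> x y E; apply: val_inj; exact: hinj (ltn_ord x) (ltn_ord y) E.
by move=> x y; rewrite hadj.
Qed.

Lemma ntri a b d : e a d -> e b d -> ~~ e a b.
Proof.
move=> ad bd; apply/negP => ab.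
exact: (noK3 esym eirr abp ab ad bd).
Qed.

Lemma ccn a b : a.+1 < m -> b.+1 < m -> e (c a) (c b) = (b == a.+1) || (a == b.+1).
Proof. exact: (H.cc hole). Qed.

Ltac clj := repeat match goal with
  | H : is_true (e _ _) |- _ => clear H
  | H : is_true (~~ e _ _) |- _ => clear H
  | H : e _ _ = _ |- _ => clear H
  | H : forall _, _ |- _ => clear H
  | H : _ = _ :> T |- _ => clear H
  end.
Ltac tlia := clj; lia.
Ltac blia := clj; repeat (case: eqP => ? /=); try done; lia.

Lemma cL b : 0 < b -> b.+3 < m -> ~~ e (c m.-1) (c b).
Proof.
have := hm => hm b0 bm; rewrite (cadj hole); try lia.
rewrite (_ : (m.-1).+1 = m); last lia.
rewrite modnn modn_small; last lia.
blia.
Qed.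

Lemma cm1 : e (c m.-1) (c 0).
Proof.
have := hm => hm; rewrite (cadj hole); try lia.
by rewrite (_ : (m.-1).+1 = m) ?modnn //; lia.
Qed.

Lemma cm2 : e (c m.-2) (c m.-1).
Proof.
have := hm => hm; rewrite (cadj hole); try lia.
rewrite (modn_small (_ : (m.-2).+1 < m)); last lia.
apply/orP; left; apply/eqP; lia.
Qed.

Lemma cmm j : j < m -> cm m c (m + j) = c j.
Proof. by move=> jm; rewrite /cm modnDl modn_small. Qed.

Lemma cmE' k : k < m -> cm m c k = c k.
Proof. exact: cmE. Qed.

Lemma minP (P : pred nat) lo hi : (exists k, [&& lo <= k, k <= hi & P k]) ->
  exists k, [/\ lo <= k, k <= hi, P k & forall j, lo <= j -> j < k -> ~~ P j].
Proof.
move=> ex; case: (ex_minnP ex) => k /and3P [lok khi Pk] hmin.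
exists k; split => // j loj jk; apply/negP => Pj.
have := hmin j; rewrite loj Pj (leq_trans (ltnW jk) khi) => /(_ isT); lia.
Qed.

Lemma maxP (P : pred nat) lo hi : (exists k, [&& lo <= k, k <= hi & P k]) ->
  exists k, [/\ lo <= k, k <= hi, P k & forall j, k < j -> j <= hi -> ~~ P j].
Proof.
move=> ex.
have ub : forall i, [&& lo <= i, i <= hi & P i] -> i <= hi by move=> i /and3P [].
case: (ex_maxnP ex ub) => k /and3P [lok khi Pk] hmax.
exists k; split => // j kj jhi; apply/negP => Pj.
have := hmax j; rewrite Pj jhi (leq_trans lok (ltnW kj)) => /(_ isT); lia.
Qed.

Lemma fromA j v : 0 < j -> j.+1 < m -> e v (c j.-1) -> e v (c j.+1) ->
  (forall k, k < m -> k != j.-1 -> k != j.+1 -> ~~ e v (c k)) -> v \in Aset e m c j.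
Proof.
move=> j0 jm h1 h2 hn; apply/(inA hole) => // k km.
case: (eqVneq k j.-1) => [->|k1]; first by rewrite h1.
case: (eqVneq k j.+1) => [->|k2]; first by rewrite h2 orbT.
by rewrite (negbTE (hn k km k1 k2)).
Qed.

Lemma fromB j v : j < m -> e v (c j) ->
  (forall k, k < m -> k != j -> ~~ e v (c k)) -> v \in Bset e m c j.
Proof.
move=> jm h1 hn; apply/(inB hole) => // k km.
case: (eqVneq k j) => [->|k1]; first by rewrite h1.
by rewrite (negbTE (hn k km k1)).
Qed.

Definition tr2 w a b := e w (c a) /\ forall k, k < m -> k != a -> k != b -> ~~ e w (c k).

Ltac slia := first [done | by apply: (@leq_trans 10) | tlia | (apply/eqP; tlia)].
Ltac adj1 := match goal with
 | H : forall k, _ -> e ?X (c k) = _ |- is_true (e ?X (c _)) => rewrite H; [done|slia]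
 | H : forall k, _ -> e ?X (c k) = _ |- is_true (~~ e ?X (c _)) => rewrite H; [done|slia]
 | H : forall k, _ -> _ -> _ -> is_true (~~ e ?X (c k)) |- is_true (~~ e ?X (c _)) =>
     apply: H; slia
 end.
Ltac adjc := first [ by rewrite ccn; slia | by rewrite esym ccn; slia | by rewrite ccn; blia | by rewrite esym ccn; blia
  | by apply: cL; tlia | by rewrite esym; apply: cL; tlia
  | by rewrite esym; apply: cm1 | by apply: cm1 | by apply: cm2 | by rewrite esym; apply: cm2 ].
Ltac adj := first [ done | by rewrite esym | match goal with
  | |- is_true (e (c _) (c _)) => adjc
  | |- is_true (~~ e (c _) (c _)) => adjc
  | _ => first [adj1 | (rewrite esym; adj1)] end ].

Definition trA3 u := forall k, k < m -> e u (c k) = (k == 2) || (k == 4).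

Lemma chainL_A u u' w1 w2 : trA3 u -> trA3 u' -> tr2 w1 1 3 -> tr2 w2 1 3 ->
  e w1 u -> ~~ e w1 u' -> e w2 u' -> ~~ e w2 u -> False.
Proof.
have := hm => hm.
rewrite /trA3 /tr2 => Hu Hu' [w1a w1n] [w2a w2n] h1 h2 h3 h4.
have uu' : ~~ e u u'.
 apply: (ntri (d := c 2)).
  adj1. adj1.
have ww : ~~ e w1 w2 by apply: (ntri (d := c 1)); adj.
apply: (@noC6 T e esym eirr abp u w1 (c 1) w2 u' (c 4)); adj.
Qed.

Lemma chainR_A u u' w1 w2 : trA3 u -> trA3 u' -> tr2 w1 5 3 -> tr2 w2 5 3 ->
  e w1 u -> ~~ e w1 u' -> e w2 u' -> ~~ e w2 u -> False.
Proof.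
have := hm => hm.
rewrite /trA3 /tr2 => Hu Hu' [w1a w1n] [w2a w2n] h1 h2 h3 h4.
have uu' : ~~ e u u' by apply: (ntri (d := c 2)); adj.
have ww : ~~ e w1 w2 by apply: (ntri (d := c 5)); adj.
apply: (@noC6 T e esym eirr abp u w1 (c 5) w2 u' (c 2)); adj.
Qed.

Lemma compat_A u u' w1 w2 : trA3 u -> trA3 u' -> tr2 w1 1 3 -> tr2 w2 5 3 ->
  e w1 u -> e w2 u -> ~~ e w1 u' -> ~~ e w2 u' -> False.
Proof.
have := hm => hm.
rewrite /trA3 /tr2 => Hu Hu' [w1a w1n] [w2a w2n] h1 h2 h3 h4.
have uu' : ~~ e u u' by apply: (ntri (d := c 2)); adj.
have ww : ~~ e w1 w2 by apply: (ntri (d := u)); adj.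
apply: (@noX3 T e esym eirr abp w1 u (c 4) (c 1) (c 2) u' w2); adj.
Qed.

Definition trB3 w := forall k, k < m -> e w (c k) = (k == 3).

Lemma chainL_B w w' u1 u2 : trB3 w -> trB3 w' -> tr2 u1 2 0 -> tr2 u2 2 0 ->
  e u1 w -> ~~ e u1 w' -> e u2 w' -> ~~ e u2 w -> False.
Proof.
have := hm => hm.
rewrite /trB3 /tr2 => Hw Hw' [u1a u1n] [u2a u2n] h1 h2 h3 h4.
have ww : ~~ e w w' by apply: (ntri (d := c 3)); adj.
have uu : ~~ e u1 u2 by apply: (ntri (d := c 2)); adj.
apply: (@noX3 T e esym eirr abp w (c 3) w' u1 (c 2) u2 (c 4)); adj.
Qed.

Lemma chainR_B w w' u1 u2 : trB3 w -> trB3 w' -> tr2 u1 4 6 -> tr2 u2 4 6 ->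
  e u1 w -> ~~ e u1 w' -> e u2 w' -> ~~ e u2 w -> False.
Proof.
have := hm => hm.
rewrite /trB3 /tr2 => Hw Hw' [u1a u1n] [u2a u2n] h1 h2 h3 h4.
have ww : ~~ e w w' by apply: (ntri (d := c 3)); adj.
have uu : ~~ e u1 u2 by apply: (ntri (d := c 4)); adj.
apply: (@noX3 T e esym eirr abp w (c 3) w' u1 (c 4) u2 (c 2)); adj.
Qed.

Lemma compat_B w w' u1 u2 : trB3 w -> trB3 w' -> tr2 u1 2 0 -> tr2 u2 4 6 ->
  e u1 w -> e u2 w -> ~~ e u1 w' -> ~~ e u2 w' -> False.
Proof.
have := hm => hm.
rewrite /trB3 /tr2 => Hw Hw' [u1a u1n] [u2a u2n] h1 h2 h3 h4.
have ww : ~~ e w w' by apply: (ntri (d := c 3)); adj.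
have uu : ~~ e u1 u2 by apply: (ntri (d := w)); adj.
apply: (@noX3 T e esym eirr abp (c 2) (c 3) (c 4) u1 w u2 w'); adj.
Qed.

Lemma cover_A u u' x : trA3 u -> trA3 u' -> e u x -> ~~ e u' x ->
  [|| x \in Bset e m c 1, x \in Aset e m c 2, x \in Aset e m c 4 | x \in Bset e m c 5].
Proof.
have := hm => hm.
rewrite /trA3 => Hu Hu' ux u'x.
have xc2 : ~~ e x (c 2) by apply: (ntri (d := u)); adj.
have xc4 : ~~ e x (c 4) by apply: (ntri (d := u)); adj.
have xu' : ~~ e x u' by rewrite esym.
have uu' : ~~ e u u' by apply: (ntri (d := c 2)); adj.
case: (boolP (e x (c 1))) => x1.
- have xc0 : ~~ e x (c 0) by apply: (ntri (d := c 1)); adj.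
  have nb : forall k, 5 <= k -> k < m -> ~~ e x (c k).
    move=> k k5 km; apply/negP => xk.
    have ex : exists k, [&& 5 <= k, k <= m.-1 & e x (c k)].
      by exists k; rewrite xk andbT; apply/andP; split; tlia.
    have [k0 [k05 k0m xk0 k0min]] := minP (P := fun k => e x (c k)) ex.
    have k0_5 : k0 = 5.
      apply/eqP; rewrite eqn_leq k05 andbT; apply: contraT; rewrite -ltnNge => k06.
      have : m <= k0 - 4 + 3.
        apply: (arc2 esym eirr hole shortest (x:=x) (y:=u) (a:=4) (g:=k0-4)).
        - tlia.
        - tlia.
        - by rewrite cmE'; [adj|tlia].
        - by rewrite (_ : 4 + (k0 - 4) = k0) ?cmE' //; tlia.
        - by rewrite esym.
        - move=> t t0 tg; rewrite cmE'; last tlia.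
          rewrite Hu; [blia|tlia].
        - move=> t tg; rewrite cmE'; last tlia.
          case: (posnP t) => [->|t0]; first by rewrite addn0.
          apply: k0min; tlia.
      tlia.
    subst k0.
    have [k1 [k15 k1m xk1 k1max]] := maxP (P := fun k => e x (c k)) ex.
    have k1_e : k1 = m.-1.
      apply/eqP; rewrite eqn_leq k1m /=; apply: contraT; rewrite -ltnNge => k1lt.
      have : m <= (m.+1 - k1) + 2.
        apply: (arc1 esym eirr hole shortest (x:=x) (a:=k1) (g:=m.+1-k1)).
        - tlia.
        - tlia.
        - by rewrite cmE' //; tlia.
        - by rewrite (_ : k1 + (m.+1 - k1) = m + 1) ?cmm //; tlia.
        - move=> t t0 tg; case: (ltnP (k1 + t) m) => h.
            rewrite cmE' //; apply: k1max; tlia.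
          by rewrite (_ : k1 + t = m + 0) ?cmm //; tlia.
      tlia.
    subst k1.
    have xm2 : ~~ e x (c m.-2) by apply: (ntri (d := c m.-1)); [adj|exact: cm2].
    have hm1 := cm1; have hm2 := cm2.
    apply: (@noX2 T e esym eirr abp (c m.-1) x (c 1) (c 0) (c m.-2) (c 5) (c 2)); adj.
  case: (boolP (e x (c 3))) => x3.
    apply/or4P; apply: Or42; apply: fromA => //; try tlia.
    move=> k km k1 k3; case: (ltnP k 5) => k5; last by apply: nb.
    move: k1 k3; case: k km k5 => [|[|[|[|[|k]]]]] // km k5; tlia.
  apply/or4P; apply: Or41; apply: fromB => //; try tlia.
  move=> k km k1; case: (ltnP k 5) => k5; last by apply: nb.
  move: k1; case: k km k5 => [|[|[|[|[|k]]]]] // km k5; tlia.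
- case: (boolP (e x (c 5))) => x5; last first.
    by case: (@noX2 T e esym eirr abp (c 2) u (c 4) u' (c 1) x (c 5)); adj.
  have xc6 : ~~ e x (c 6) by apply: (ntri (d := c 5)); adj.
  have nb : forall k, 7 <= k -> k <= m -> ~~ e x (cm m c k).
    move=> k k7 km; apply/negP => xk.
    have ex : exists k, [&& 7 <= k, k <= m & e x (cm m c k)].
      by exists k; rewrite xk andbT; apply/andP; split; tlia.
    have [k1 [k17 k1m xk1 k1max]] := maxP (P := fun k => e x (cm m c k)) ex.
    have : m <= (m.+2 - k1) + 3.
      apply: (arc2 esym eirr hole shortest (x:=u) (y:=x) (a:=k1) (g:=m.+2-k1)).
      - tlia.
      - tlia.
      - done.
      - rewrite (_ : k1 + (m.+2 - k1) = m + 2) ?cmm //; try tlia; adj.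
      - done.
      - move=> t t0 tg.
        case: (leqP (k1 + t) m) => h; first by apply: k1max; tlia.
        case: (eqVneq (k1 + t) (m + 1)) => h2.
          by rewrite h2 cmm //; tlia.
        by rewrite (_ : k1 + t = m + 2) ?cmm //; tlia.
      - move=> t tg.
        case: (ltnP (k1 + t) m) => h.
          by rewrite cmE' // Hu //; blia.
        case: (eqVneq (k1 + t) m) => h2.
          rewrite h2 /cm modnn Hu; last tlia. done.
        rewrite (_ : k1 + t = m + 1); last tlia.
        rewrite cmm; last tlia.
        by rewrite Hu; last tlia.
    tlia.
  have x0 : ~~ e x (c 0) by have := nb m (ltac:(tlia)) (leqnn _); rewrite /cm modnn.
  have nb' : forall k, 7 <= k -> k < m -> ~~ e x (c k).
    by move=> k k7 km; have := nb k k7 (ltnW km); rewrite cmE'.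
  case: (boolP (e x (c 3))) => x3.
    apply/or4P; apply: Or43; apply: fromA => //; try tlia.
    move=> k km k1 k3; case: (ltnP k 7) => k7; last by apply: nb'.
    move: k1 k3; case: k km k7 => [|[|[|[|[|[|[|k]]]]]]] // km k7; tlia.
  apply/or4P; apply: Or44; apply: fromB => //; try tlia.
  move=> k km k1; case: (ltnP k 7) => k7; last by apply: nb'.
  move: k1; case: k km k7 => [|[|[|[|[|[|[|k]]]]]]] // km k7; tlia.
Qed.

Lemma cover_B w w' x : trB3 w -> trB3 w' -> e w x -> ~~ e w' x ->
  [|| x \in Aset e m c 1, x \in Bset e m c 2, x \in Bset e m c 4 | x \in Aset e m c 5].
Proof.
have := hm => hm.
rewrite /trB3 => Hw Hw' wx w'x.
have xc3 : ~~ e x (c 3) by apply: (ntri (d := w)); adj.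
have xw' : ~~ e x w' by rewrite esym.
have ww' : ~~ e w w' by apply: (ntri (d := c 3)); adj.
case: (boolP (e x (c 2))) => x2.
- have xc1 : ~~ e x (c 1) by apply: (ntri (d := c 2)); adj.
  case: (boolP (e x (c 4))) => x4.
    have xc5 : ~~ e x (c 5) by apply: (ntri (d := c 4)); adj.
    by case: (@noX2 T e esym eirr abp (c 2) (c 3) (c 4) x (c 1) w' (c 5)); adj.
  have nb : forall k, 5 <= k -> k < m -> ~~ e x (c k).
    move=> k k5 km; apply/negP => xk.
    have ex : exists k, [&& 5 <= k, k <= m.-1 & e x (c k)].
      by exists k; rewrite xk andbT; apply/andP; split; tlia.
    have [k0 [k05 k0m xk0 k0min]] := minP (P := fun k => e x (c k)) ex.
    have : m <= k0 - 3 + 3.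
      apply: (arc2 esym eirr hole shortest (x:=x) (y:=w) (a:=3) (g:=k0-3)).
      - tlia.
      - tlia.
      - by rewrite cmE'; [adj|tlia].
      - by rewrite (_ : 3 + (k0 - 3) = k0) ?cmE' //; tlia.
      - by rewrite esym.
      - move=> t t0 tg; rewrite cmE'; last tlia.
        rewrite Hw; [blia|tlia].
      - move=> t tg; rewrite cmE'; last tlia.
        case: (posnP t) => [->|t0]; first by rewrite addn0.
        case: (eqVneq t 1) => [->|t1]; first by [].
        apply: k0min; tlia.
    tlia.
  case: (boolP (e x (c 0))) => x0.
    apply/or4P; apply: Or41; apply: fromA => //; try tlia.
    move=> k km k1 k3; case: (ltnP k 5) => k5; last by apply: nb.
    move: k1 k3; case: k km k5 => [|[|[|[|[|k]]]]] // km k5; tlia.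
  apply/or4P; apply: Or42; apply: fromB => //; try tlia.
  move=> k km k1; case: (ltnP k 5) => k5; last by apply: nb.
  move: k1; case: k km k5 => [|[|[|[|[|k]]]]] // km k5; tlia.
- case: (boolP (e x (c 4))) => x4.
    have xc5 : ~~ e x (c 5) by apply: (ntri (d := c 4)); adj.
    have nb : forall k, 7 <= k -> k <= m.+1 -> ~~ e x (cm m c k).
      move=> k k7 km; apply/negP => xk.
      have ex : exists k, [&& 7 <= k, k <= m.+1 & e x (cm m c k)].
        by exists k; rewrite xk andbT; apply/andP; split; tlia.
      have [k1 [k17 k1m xk1 k1max]] := maxP (P := fun k => e x (cm m c k)) ex.
      have : m <= (m.+3 - k1) + 3.
        apply: (arc2 esym eirr hole shortest (x:=w) (y:=x) (a:=k1) (g:=m.+3-k1)).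
        - tlia.
        - tlia.
        - done.
        - rewrite (_ : k1 + (m.+3 - k1) = m + 3); last tlia.
          rewrite cmm; last tlia. adj.
        - done.
        - move=> t t0 tg.
          case: (leqP (k1 + t) m.+1) => h; first by apply: k1max; tlia.
          case: (eqVneq (k1 + t) (m + 2)) => h2.
            by rewrite h2 cmm //; tlia.
          rewrite (_ : k1 + t = m + 3); last tlia.
          by rewrite cmm; last tlia.
        - move=> t tg.
          case: (ltnP (k1 + t) m) => h.
            by rewrite cmE' // Hw //; blia.
          case: (eqVneq (k1 + t) m) => h2.
            rewrite h2 /cm modnn Hw; last tlia. done.
          case: (eqVneq (k1 + t) (m + 1)) => h3.
            rewrite h3 cmm; last tlia. by rewrite Hw; last tlia.
          rewrite (_ : k1 + t = m + 2); last tlia.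
          rewrite cmm; last tlia. by rewrite Hw; last tlia.
      tlia.
    have x0 : ~~ e x (c 0) by have := nb m (ltac:(tlia)) (ltac:(tlia)); rewrite /cm modnn.
    have x1 : ~~ e x (c 1).
      have := nb (m + 1) (ltac:(tlia)) (ltac:(tlia)); rewrite cmm //; tlia.
    have nb' : forall k, 7 <= k -> k < m -> ~~ e x (c k).
      by move=> k k7 km; have := nb k k7 (ltac:(tlia)); rewrite cmE'.
    case: (boolP (e x (c 6))) => x6.
      apply/or4P; apply: Or44; apply: fromA => //; try tlia.
      move=> k km k1 k3; case: (ltnP k 7) => k7; last by apply: nb'.
      move: k1 k3; case: k km k7 => [|[|[|[|[|[|[|k]]]]]]] // km k7; tlia.
    apply/or4P; apply: Or43; apply: fromB => //; try tlia.
    move=> k km k1; case: (ltnP k 7) => k7; last by apply: nb'.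
    move: k1; case: k km k7 => [|[|[|[|[|[|[|k]]]]]]] // km k7; tlia.
  case: (boolP (e x (c 1))) => x1.
    by case: (@noC5 T e esym eirr abp x w (c 3) (c 2) (c 1)); adj.
  case: (boolP (e x (c 5))) => x5.
    by case: (@noC5 T e esym eirr abp x w (c 3) (c 4) (c 5)); adj.
  by case: (@noT2 T e esym eirr abp (c 3) (c 2) (c 1) (c 4) (c 5) w x); adj.
Qed.

Lemma trB_of j v b : j < m -> v \in Bset e m c j -> tr2 v j b.
Proof.
move=> jm /(inB hole _ jm) H; split; first by rewrite H ?eqxx.
by move=> k km kj _; rewrite H // (negbTE kj).
Qed.

Lemma trA_of1 j v : 0 < j -> j.+1 < m -> v \in Aset e m c j -> tr2 v j.-1 j.+1.
Proof.
move=> j0 jm /(inA hole _ j0 jm) H; split; first by rewrite H ?eqxx //; tlia.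
by move=> k km k1 k2; rewrite H // (negbTE k1) (negbTE k2).
Qed.

Lemma trA_of2 j v : 0 < j -> j.+1 < m -> v \in Aset e m c j -> tr2 v j.+1 j.-1.
Proof.
move=> j0 jm /(inA hole _ j0 jm) H; split; first by rewrite H ?eqxx ?orbT //; tlia.
by move=> k km k1 k2; rewrite H // (negbTE k1) (negbTE k2).
Qed.

Lemma main3 :
  (strict_po_on (Aset e m c 3) (ltA e m c 3) /\
   forall u u', u \in Aset e m c 3 -> u' \in Aset e m c 3 ->
     (~~ ltA e m c 3 u u' /\ ~~ ltA e m c 3 u' u) <-> Nbh e u = Nbh e u') /\
  (strict_po_on (Bset e m c 3) (ltB e m c 3) /\
   forall w w', w \in Bset e m c 3 -> w' \in Bset e m c 3 ->
     (~~ ltB e m c 3 w w' /\ ~~ ltB e m c 3 w' w) <-> Nbh e w = Nbh e w').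
Proof.
have := hm => hm.
have i2 : im m 3 2 = 1 by rewrite imE //; tlia.
have i1 : im m 3 1 = 2 by rewrite imE //; tlia.
have p1 : ip m 3 1 = 4 by rewrite ipE //; tlia.
have p2 : ip m 3 2 = 5 by rewrite ipE //; tlia.
have ltAE : forall a b, ltA e m c 3 a b =
   [exists w, (w \in Bset e m c 1 :|: Aset e m c 2) && e w a && ~~ e w b] ||
   [exists w, (w \in Aset e m c 4 :|: Bset e m c 5) && e w b && ~~ e w a].
  by move=> a b; rewrite /ltA i1 i2 p1 p2.
have ltBE : forall a b, ltB e m c 3 a b =
   [exists w, (w \in Aset e m c 1 :|: Bset e m c 2) && e w a && ~~ e w b] ||
   [exists w, (w \in Bset e m c 4 :|: Aset e m c 5) && e w b && ~~ e w a].
  by move=> a b; rewrite /ltB i1 i2 p1 p2.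
have A3 : forall u, u \in Aset e m c 3 -> trA3 u.
  have h1 : 0 < 3 by []. have h2 : 4 < m by tlia.
  by move=> u /(inA hole _ h1 h2).
have B3 : forall u, u \in Bset e m c 3 -> trB3 u.
  have h2 : 3 < m by tlia.
  by move=> u /(inB hole _ h2).
have LA : forall v, v \in Bset e m c 1 :|: Aset e m c 2 -> tr2 v 1 3.
  move=> v; rewrite inE => /orP [] h; first by apply: trB_of => //; tlia.
  by apply: (trA_of1 (j:=2)) => //; tlia.
have RA : forall v, v \in Aset e m c 4 :|: Bset e m c 5 -> tr2 v 5 3.
  move=> v; rewrite inE => /orP [] h; last by apply: trB_of => //; tlia.
  by apply: (trA_of2 (j:=4)) => //; tlia.
have LB : forall v, v \in Aset e m c 1 :|: Bset e m c 2 -> tr2 v 2 0.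
  move=> v; rewrite inE => /orP [] h; last by apply: trB_of => //; tlia.
  by apply: (trA_of2 (j:=1)) => //; tlia.
have RB : forall v, v \in Bset e m c 4 :|: Aset e m c 5 -> tr2 v 4 6.
  move=> v; rewrite inE => /orP [] h; first by apply: trB_of => //; tlia.
  by apply: (trA_of1 (j:=5)) => //; tlia.
split; split.
- apply: (po_abs ltAE).
  + move=> a b w1 w2 aS bS w1L w2L; apply: chainL_A; auto.
  + move=> a b w1 w2 aS bS w1L w2L; apply: chainR_A; auto.
  + move=> a b w1 w2 aS bS w1L w2L; apply: compat_A; auto.
- apply: (inc_abs esym ltAE) => a b x aS bS ax bx.
  have := cover_A (A3 _ aS) (A3 _ bS) ax bx.
  by rewrite !inE; case/or4P => ->; rewrite ?orbT.
- apply: (po_abs ltBE).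
  + move=> a b w1 w2 aS bS w1L w2L; apply: chainL_B; auto.
  + move=> a b w1 w2 aS bS w1L w2L; apply: chainR_B; auto.
  + move=> a b w1 w2 aS bS w1L w2L; apply: compat_B; auto.
- apply: (inc_abs esym ltBE) => a b x aS bS ax bx.
  have := cover_B (B3 _ aS) (B3 _ bS) ax bx.
  by rewrite !inE; case/or4P => ->; rewrite ?orbT.
Qed.
End M.

End M.
Import M.

Module R.

Section R.
Variables (T : finType) (e : rel T).
Hypothesis esym : symmetric e.
Hypothesis eirr : irreflexive e.
Variables (m : nat) (c : nat -> T).
Hypothesis hole : is_hole e m c.
Variable s : nat.

Let m5 : 5 <= m. Proof. by case: hole. Qed.
Let mp : 0 < m. Proof. have := m5; lia. Qed.

Definition crot k := c ((k + s) %% m).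

Lemma imM p d : d <= m -> im m p d = im m (p %% m) d.
Proof. by move=> dm; rewrite /im -!addnBA // modnDml. Qed.

Lemma ipM p d : ip m p d = ip m (p %% m) d.
Proof. by rewrite /ip modnDml. Qed.

Lemma cmM p : cm m c p = cm m c (p %% m).
Proof. by rewrite /cm modn_mod. Qed.

Lemma Aset_mod p q : p = q %[mod m] -> Aset e m c p = Aset e m c q.
Proof.
move=> pq; rewrite /Aset (imM p) // (ipM p) pq -(imM q) // -ipM //.
Qed.

Lemma Bset_mod p q : p = q %[mod m] -> Bset e m c p = Bset e m c q.
Proof. by move=> pq; rewrite /Bset cmM pq -cmM. Qed.

Lemma crot_hole : is_hole e m crot.
Proof.
split => //; split.
  move=> a b am bm /(cinj hole); rewrite !ltn_pmod // => /(_ isT isT) /eqP.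
  by rewrite eqn_modDr !modn_small // => /eqP.
move=> a b am bm.
have -> : e (crot a) (crot b) = e (cm m c (a + s)) (cm m c (b + s)) by [].
by rewrite (cm_adj hole) -!addSn !eqn_modDr [b %% m]modn_small // [a %% m]modn_small.
Qed.

Lemma cmrot k : cm m crot k = cm m c (k + s).
Proof. by rewrite /cm /crot modnDml. Qed.

Lemma Csetrot : Cset m crot = Cset m c.
Proof.
apply/setP => x; rewrite !inE; apply/existsP/existsP => [[k /eqP ->]|[k /eqP ->]].
  have h : (k + s) %% m < m by rewrite ltn_pmod.
  by exists (Ordinal h).
have h : (k + (m - s %% m)) %% m < m by rewrite ltn_pmod.
exists (Ordinal h); apply/eqP; rewrite /crot /= modnDml.
have hs : s %% m < m by rewrite ltn_pmod.
rewrite -modnDmr -addnA subnK; last exact: ltnW.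
by rewrite modnDr modn_small.
Qed.

Lemma Arot p q : p + s = q %[mod m] -> Aset e m crot p = Aset e m c q.
Proof.
move=> pq; rewrite -(Aset_mod pq) /Aset Csetrot !cmrot.
rewrite (cmM (im m p 1 + s)) (cmM (im m (p + s) 1)) (cmM (ip m p 1 + s)) (cmM (ip m (p + s) 1)).
rewrite /im /ip !modnDml.
have -> : p + m - 1 + s = p + s + m - 1 by lia.
by rewrite modn_mod (addnAC p 1 s) modn_mod.
Qed.

Lemma Brot p q : p + s = q %[mod m] -> Bset e m crot p = Bset e m c q.
Proof. by move=> pq; rewrite -(Bset_mod pq) /Bset Csetrot !cmrot. Qed.
End R.

Lemma modE m a b : a = b + m -> a = b %[mod m].
Proof. by move=> ->; rewrite modnDr. Qed.


End R.
Import R.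

Theorem proposition3p7 (T : finType) (e : rel T)
  (esym : symmetric e) (eirr : irreflexive e)
  (conn : connected_graph e) (abp : almost_bip_perm e)
  (m : nat) (c : nat -> T) (hole : is_hole e m c)
  (shortest : forall (m' : nat) (c' : nat -> T), is_hole e m' c' -> m <= m')
  (i : nat) (hi : i < m) :
  (strict_po_on (Aset e m c i) (ltA e m c i) /\
   forall u u', u \in Aset e m c i -> u' \in Aset e m c i ->
     (~~ ltA e m c i u u' /\ ~~ ltA e m c i u' u) <-> Nbh e u = Nbh e u') /\
  (strict_po_on (Bset e m c i) (ltB e m c i) /\
   forall w w', w \in Bset e m c i -> w' \in Bset e m c i ->
     (~~ ltB e m c i w w' /\ ~~ ltB e m c i w' w) <-> Nbh e w = Nbh e w').
Proof.
have m5 : 5 <= m by case: hole.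
have hole' := crot_hole hole (i + m - 3).
have := main3 esym eirr abp hole' shortest.
have EA : forall p q, p + (i + m - 3) = q %[mod m] -> Aset e m (crot m c (i + m - 3)) p = Aset e m c q.
  by move=> p q; apply: Arot.
have EB : forall p q, p + (i + m - 3) = q %[mod m] -> Bset e m (crot m c (i + m - 3)) p = Bset e m c q.
  by move=> p q; apply: Brot.
rewrite /ltA /ltB.
rewrite (EA 3 i); last by apply: modE; lia.
rewrite (EB 3 i); last by apply: modE; lia.
rewrite (EA (im m 3 2) (im m i 2)); last by rewrite /im modnDml modn_mod; apply: modE; lia.
rewrite (EA (im m 3 1) (im m i 1)); last by rewrite /im modnDml modn_mod; apply: modE; lia.
rewrite (EB (im m 3 2) (im m i 2)); last by rewrite /im modnDml modn_mod; apply: modE; lia.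
rewrite (EB (im m 3 1) (im m i 1)); last by rewrite /im modnDml modn_mod; apply: modE; lia.
rewrite (EA (ip m 3 2) (ip m i 2)); last by rewrite /ip modnDml modn_mod; apply: modE; lia.
rewrite (EA (ip m 3 1) (ip m i 1)); last by rewrite /ip modnDml modn_mod; apply: modE; lia.
rewrite (EB (ip m 3 2) (ip m i 2)); last by rewrite /ip modnDml modn_mod; apply: modE; lia.
rewrite (EB (ip m 3 1) (ip m i 1)); last by rewrite /ip modnDml modn_mod; apply: modE; lia.
done.
Qed.
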